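(* Let $A$ be a wqo such that $\mathbf{w}(A)\ge\omega$ is additively indecomposable. Then $A$ has a substructure $C$ with $\mathbf{w}(C)=\mathbf{w}(A)$ which is transferable.
   Context: A wqo is a quasi-order in which every infinite sequence $x_0,x_1,\dots$ has $i<j$ with $x_i\le x_j$. $\mathbf{w}(A)$ (width) is the rank of the root of the well-founded tree of finite sequences of pairwise incomparable elements of $A$ (root: empty sequence, children: one-element extensions; rank $r(s)=\sup\{r(t)+1: t\text{ child of } s\}$). An ordinal is additively indecomposable if it is of the form $\omega^\gamma$. A substructure is a subset with the restricted ordering. A wqo $C$ is transferable if for every finite set $\{x_1,\dots,x_n\}\subseteq C$, the substructure $\{y\in C : y\not\le x_i \text{ for all } i\}$ has width $\mathbf{w}(C)$. *)

(* Defs.v *)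
From Stdlib Require Import List Arith.
Import ListNotations.

(** * Ordinals
   [osup Ia f] denotes the STRICT supremum  sup_{i : I} (f i + 1),
   i.e. the least ordinal strictly above every [f i].  In particular
   [osup Empty_set _] is 0, and the rank of a tree node,
   r(s) = sup { r(t)+1 : t child of s }, is literally [osup children r]. *)
Inductive Ord : Type :=
  | osup : forall I : Type, (I -> Ord) -> Ord.

Fixpoint ole (a b : Ord) {struct a} : Prop :=
  match a, b with
  | osup Ia f, osup Jb g => forall i : Ia, exists j : Jb, ole (f i) (g j)
  end.

Definition olt (a b : Ord) : Prop :=
  match b with osup Jb g => exists j : Jb, ole a (g j) end.

Definition oeq (a b : Ord) : Prop := ole a b /\ ole b a.

Definition ozero : Ord := osup Empty_set (fun e => match e with end).

Fixpoint ofin (n : nat) : Ord :=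
  match n with
  | 0 => ozero
  | S m => osup unit (fun _ => ofin m)
  end.

Definition oomega : Ord := osup nat ofin.

(* ordinal addition a + b, by recursion on b:
   a + 0 = a,  a + sup_j (g j + 1) = sup_j ((a + g j) + 1) *)
Fixpoint oadd (a b : Ord) {struct b} : Ord :=
  match b with
  | osup Jb g =>
      match a with
      | osup Ia f =>
          osup (Ia + Jb)%type
            (fun k => match k with
                      | inl i => f i
                      | inr j => oadd a (g j)
                      end)
      end
  end.

Fixpoint omulnat (a : Ord) (n : nat) : Ord :=
  match n with
  | 0 => ozero
  | S m => oadd (omulnat a m) a
  end.

(* omega ^ b, by recursion on b:
   omega^0 = 1,  omega^(sup_j (g j + 1)) = sup_{j,n} (omega^(g j) * n + 1) (and >= 1) *)
Fixpoint opow (b : Ord) : Ord :=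
  match b with
  | osup Jb g =>
      osup (unit + (Jb * nat))%type
        (fun k => match k with
                  | inl _ => ozero
                  | inr (j, n) => omulnat (opow (g j)) n
                  end)
  end.

Definition add_indecomposable (a : Ord) : Prop :=
  exists g : Ord, oeq a (opow g).

Definition quasi_order {A : Type} (le : A -> A -> Prop) : Prop :=
  (forall x, le x x) /\ (forall x y z, le x y -> le y z -> le x z).

Definition wqo {A : Type} (le : A -> A -> Prop) : Prop :=
  quasi_order le /\
  forall f : nat -> A, exists i j, i < j /\ le (f i) (f j).

Definition antichain_seq {A : Type} (le : A -> A -> Prop) (s : list A) : Prop :=
  forall (i j : nat) (x y : A), i <> j ->
    nth_error s i = Some x -> nth_error s j = Some y -> ~ le x y.

Definition children {A : Type} (le : A -> A -> Prop) (s : list A) : Type :=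
  { t : list A | antichain_seq le t /\ exists x : A, t = s ++ [x] }.

Definition is_rank_fn {A : Type} (le : A -> A -> Prop) (rho : list A -> Ord) : Prop :=
  forall s : list A, antichain_seq le s ->
    oeq (rho s) (osup (children le s) (fun t => rho (proj1_sig t))).

(* w(A) = a : the rank of the root (empty sequence) is a.
   (A rank function exists iff the tree is well-founded, and is then unique
   up to [oeq].) *)
Definition has_width {A : Type} (le : A -> A -> Prop) (a : Ord) : Prop :=
  exists rho : list A -> Ord, is_rank_fn le rho /\ oeq (rho []) a.

Definition sub_le {A : Type} (le : A -> A -> Prop) (C : A -> Prop) :
  {x : A | C x} -> {x : A | C x} -> Prop :=
  fun x y => le (proj1_sig x) (proj1_sig y).

Definition transferable {A : Type} (le : A -> A -> Prop) (C : A -> Prop) : Prop :=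
  exists wC : Ord, has_width (sub_le le C) wC /\
    forall xs : list A, (forall x, In x xs -> C x) ->
      has_width (sub_le le (fun y => C y /\ forall x, In x xs -> ~ le y x)) wC.

(* Main.v *)
Require Import Defs.
From Stdlib Require Import List Arith Lia Classical ClassicalEpsilon FunctionalExtensionality.
Import ListNotations.

Lemma ole_refl : forall a, ole a a.
Proof. induction a as [Ia f IH]; simpl; intros i; exists i; apply IH. Qed.

Lemma ole_trans : forall a b c, ole a b -> ole b c -> ole a c.
Proof.
  induction a as [Ia f IH]; intros [Jb g] [K h] H1 H2; simpl in *.
  intros i; destruct (H1 i) as [j Hj]; destruct (H2 j) as [k Hk].
  exists k; eauto.
Qed.

Lemma olt_ole : forall a b, olt a b -> ole a b.
Proof.
  induction a as [Ia f IH]; intros [Jb g] [j Hj]; simpl in *.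
  intros i. destruct (g j) as [K h] eqn:E. simpl in Hj. destruct (Hj i) as [k Hk].
  exists j. apply IH. rewrite E. simpl. exists k. exact Hk.
Qed.

Lemma ole_olt_trans : forall a b c, ole a b -> olt b c -> olt a c.
Proof. intros a b [K h] H [k Hk]; simpl; exists k; eapply ole_trans; eauto. Qed.

Lemma olt_ole_trans : forall a b c, olt a b -> ole b c -> olt a c.
Proof.
  intros a [Jb g] [K h] [j Hj] H; simpl in *. destruct (H j) as [k Hk].
  exists k; eapply ole_trans; eauto.
Qed.

Lemma olt_trans : forall a b c, olt a b -> olt b c -> olt a c.
Proof. intros. eapply ole_olt_trans; [apply olt_ole|]; eauto. Qed.

Lemma lt_osup : forall Ia (f : Ia -> Ord) i, olt (f i) (osup Ia f).
Proof. intros; simpl; exists i; apply ole_refl. Qed.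

Lemma osup_le : forall Ia (f : Ia -> Ord) c, (forall i, olt (f i) c) -> ole (osup Ia f) c.
Proof. intros Ia f [K h] H; simpl; intros i; apply (H i). Qed.

Lemma le_osup_inv : forall Ia (f : Ia -> Ord) c, ole (osup Ia f) c -> forall i, olt (f i) c.
Proof. intros Ia f [K h] H i; simpl in *; apply H. Qed.

Lemma olt_acc : forall a, Acc olt a.
Proof.
  assert (H : forall a b, ole b a -> Acc olt b).
  { induction a as [Ia f IH]; intros b Hb; constructor; intros c Hc.
    pose proof (olt_ole_trans _ _ _ Hc Hb) as [i Hi]. eapply IH; eauto. }
  intros a; apply (H a), ole_refl.
Qed.

Lemma olt_irrefl : forall a, ~ olt a a.
Proof.
  intros a. induction (olt_acc a) as [a _ IH]. intros H. apply (IH a H H).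
Qed.

Lemma ole_total : forall a b, ole a b \/ olt b a.
Proof.
  induction a as [Ia f IH]; intros [Jb g].
  destruct (classic (forall i, exists j, ole (f i) (g j))) as [H|H].
  - left; exact H.
  - right. apply not_all_ex_not in H as [i Hi].
    simpl. exists i. destruct (f i) as [K h] eqn:E. simpl. intros j.
    destruct (IH i (g j)) as [H1|H1].
    + exfalso; apply Hi; exists j; rewrite <- E; exact H1.
    + rewrite E in H1. exact H1.
Qed.

Lemma ole_not_lt : forall a b, ole a b -> ~ olt b a.
Proof. intros a b H1 H2. apply (olt_irrefl a). eapply ole_olt_trans; eauto. Qed.

Lemma ole_intro : forall A (F : A -> Ord) B (G : B -> Ord),
  (forall i, exists j, ole (F i) (G j)) -> ole (osup A F) (osup B G).
Proof. intros; exact H. Qed.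

Lemma olt_intro : forall a B (G : B -> Ord) j, ole a (G j) -> olt a (osup B G).
Proof. intros; exists j; exact H. Qed.

Fixpoint nsum (a b : Ord) {struct a} : Ord :=
  match a with
  | osup Ia f =>
    (fix inner (b : Ord) : Ord :=
       match b with
       | osup Jb g => osup (Ia + Jb)%type (fun k => match k with
                                            | inl i => nsum (f i) (osup Jb g)
                                            | inr j => inner (g j) end)
       end) b
  end.

Lemma nsum_eq : forall Ia f Jb g, nsum (osup Ia f) (osup Jb g) =
  osup (Ia + Jb)%type (fun k => match k with
                              | inl i => nsum (f i) (osup Jb g)
                              | inr j => nsum (osup Ia f) (g j) end).
Proof. reflexivity. Qed.

Lemma nsum_le : forall a b c,
  (forall a', olt a' a -> olt (nsum a' b) c) ->
  (forall b', olt b' b -> olt (nsum a b') c) ->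
  ole (nsum a b) c.
Proof.
  intros [Ia f] [Jb g] c H1 H2. rewrite nsum_eq. apply osup_le.
  intros [i|j]. - apply H1, lt_osup. - apply H2, lt_osup.
Qed.

Lemma nsum_mono : forall a a' b b', ole a a' -> ole b b' -> ole (nsum a b) (nsum a' b').
Proof.
  induction a as [Ia f IHa]. intros a' b. revert a'.
  induction b as [Jb g IHb]. intros [Ia' f'] [Jb' g'] Ha Hb.
  rewrite !nsum_eq. apply ole_intro. intros [i|j].
  - destruct (Ha i) as [i' Hi']. exists (inl i'). apply IHa; auto.
  - destruct (Hb j) as [j' Hj']. exists (inr j'). apply IHb; auto.
Qed.

Lemma nsum_strict_l : forall a a' b, olt a' a -> olt (nsum a' b) (nsum a b).
Proof.
  intros [Ia f] a' [Jb g] [i Hi]. rewrite nsum_eq. apply (olt_intro _ _ _ (inl i)).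
  apply nsum_mono; auto using ole_refl.
Qed.

Lemma nsum_strict_r : forall a b b', olt b' b -> olt (nsum a b') (nsum a b).
Proof.
  intros [Ia f] [Jb g] b' [j Hj]. rewrite nsum_eq. apply (olt_intro _ _ _ (inr j)).
  apply nsum_mono; auto using ole_refl.
Qed.

Lemma oadd_eq : forall Ia f Jb g, oadd (osup Ia f) (osup Jb g) =
  osup (Ia + Jb)%type (fun k => match k with
                      | inl i => f i
                      | inr j => oadd (osup Ia f) (g j) end).
Proof. reflexivity. Qed.

Lemma oadd_mono : forall a a' b b', ole a a' -> ole b b' -> ole (oadd a b) (oadd a' b').
Proof.
  intros a a' b; revert a a'. induction b as [Jb g IHb].
  intros [Ia f] [Ia' f'] [Jb' g'] Ha Hb. rewrite !oadd_eq. apply ole_intro. intros [i|j].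
  - destruct (Ha i) as [i' Hi']. exists (inl i'). auto.
  - destruct (Hb j) as [j' Hj']. exists (inr j'). apply IHb; auto.
Qed.

Lemma oadd_ge_l : forall a b, ole a (oadd a b).
Proof.
  intros [Ia f] [Jb g]. rewrite oadd_eq. apply ole_intro. intros i. exists (inl i). apply ole_refl.
Qed.

Lemma oadd_strict_r : forall a b b', olt b' b -> olt (oadd a b') (oadd a b).
Proof.
  intros [Ia f] [Jb g] b' [j Hj]. rewrite oadd_eq. apply (olt_intro _ _ _ (inr j)).
  apply oadd_mono; auto using ole_refl.
Qed.

Lemma oadd_zero : forall a, ole (oadd a ozero) a.
Proof.
  intros [Ia f]. unfold ozero. rewrite oadd_eq. apply ole_intro. intros [i|[]]. exists i. apply ole_refl.
Qed.

Lemma omul_mono_base : forall a a' n, ole a a' -> ole (omulnat a n) (omulnat a' n).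
Proof.
  intros a a' n H; induction n. apply ole_refl. apply oadd_mono; auto.
Qed.

Lemma omul_mono_n : forall a n m, n <= m -> ole (omulnat a n) (omulnat a m).
Proof.
  intros a n m H; induction H. apply ole_refl.
  eapply ole_trans; [exact IHle|]. apply oadd_ge_l.
Qed.

Lemma opow_mono : forall a b, ole a b -> ole (opow a) (opow b).
Proof.
  induction a as [Ia f IH]. intros [Jb g] H. simpl. intros [u|[i n]].
  - exists (inl tt). apply ole_refl.
  - destruct (H i) as [j Hj]. exists (inr (j, n)). apply omul_mono_base. auto.
Qed.

Lemma ozero_le : forall a, ole ozero a.
Proof. intros [Ia f]; simpl; intros []. Qed.

Lemma ozero_lt_opow : forall b, olt ozero (opow b).
Proof. intros [Jb g]. apply (olt_intro _ _ _ (inl tt)). apply ole_refl. Qed.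

Lemma not_lt_zero : forall a, ~ olt a ozero.
Proof. intros a [[] _]. Qed.

Lemma decomp : forall d n c, olt c (omulnat d n) ->
  exists k e, k < n /\ olt e d /\ ole c (oadd (omulnat d k) e).
Proof.
  intros d n; induction n; intros c Hc.
  - exfalso; exact (not_lt_zero c Hc).
  - change (olt c (oadd (omulnat d n) d)) in Hc. destruct d as [K h]. destruct (omulnat (osup K h) n) as [Ia f] eqn:E.
    rewrite oadd_eq in Hc. destruct Hc as [[i|kk] Hi].
    + destruct (IHn c) as (k & e & H1 & H2 & H3).
      { simpl. exists i. exact Hi. }
      exists k, e. split; [lia|auto].
    + exists n, (h kk). split; [lia|]. split; [apply lt_osup|]. rewrite E. exact Hi.
Qed.

Lemma lt_oadd_inv : forall a K (h : K -> Ord) c, olt c (oadd a (osup K h)) ->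
  olt c a \/ exists k, ole c (oadd a (h k)).
Proof.
  intros [Ia f] K h c H. rewrite oadd_eq in H. destruct H as [[i|k] Hi].
  - left. apply (olt_intro _ _ _ i). exact Hi.
  - right. exists k. exact Hi.
Qed.

Definition closed (d : Ord) : Prop :=
  forall a b, olt a d -> olt b d -> olt (nsum a b) d.

Lemma keyM : forall d, closed d -> forall n e1, olt e1 d -> forall m e2, olt e2 d ->
  ole (nsum (oadd (omulnat d n) e1) (oadd (omulnat d m) e2))
      (oadd (omulnat d (n+m)) (nsum e1 e2)).
Proof.
  intros d Hcl n. induction n as [n IHn] using lt_wf_ind.
  intros e1. induction e1 as [K h IHe1]. intros He1.
  intros m. induction m as [m IHm] using lt_wf_ind.
  intros e2. induction e2 as [K2 h2 IHe2]. intros He2.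
  apply nsum_le.
  - intros a' Ha'. apply lt_oadd_inv in Ha' as [Ha'|[k Hk]].
    + destruct (decomp _ _ _ Ha') as (k & e' & Hkn & He' & Ha2).
      eapply ole_olt_trans. { apply nsum_mono; [exact Ha2|apply ole_refl]. }
      eapply ole_olt_trans. { apply IHn; auto. }
      eapply olt_ole_trans. { apply oadd_strict_r. apply Hcl; eauto. }
      change (oadd (omulnat d (k+m)) d) with (omulnat d (S (k+m))).
      eapply ole_trans. { apply omul_mono_n. instantiate (1 := n+m). lia. }
      apply oadd_ge_l.
    + assert (Hhk : olt (h k) d) by (eapply olt_trans; [apply lt_osup|exact He1]).
      eapply ole_olt_trans. { apply nsum_mono; [exact Hk|apply ole_refl]. }
      eapply ole_olt_trans. { apply IHe1; auto. }
      apply oadd_strict_r. apply nsum_strict_l. apply lt_osup.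
  - intros b' Hb'. apply lt_oadd_inv in Hb' as [Hb'|[k Hk]].
    + destruct (decomp _ _ _ Hb') as (k & e' & Hkm & He' & Hb2).
      eapply ole_olt_trans. { apply nsum_mono; [apply ole_refl|exact Hb2]. }
      eapply ole_olt_trans. { apply IHm; auto. }
      eapply olt_ole_trans. { apply oadd_strict_r. apply Hcl; eauto. }
      change (oadd (omulnat d (n+k)) d) with (omulnat d (S (n+k))).
      eapply ole_trans. { apply omul_mono_n. instantiate (1 := n+m). lia. }
      apply oadd_ge_l.
    + assert (Hhk : olt (h2 k) d) by (eapply olt_trans; [apply lt_osup|exact He2]).
      eapply ole_olt_trans. { apply nsum_mono; [apply ole_refl|exact Hk]. }
      eapply ole_olt_trans. { apply IHe2; auto. }
      apply oadd_strict_r. apply nsum_strict_r. apply lt_osup.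
Qed.

Lemma nsum_zero : ole (nsum ozero ozero) ozero.
Proof. apply nsum_le; intros x Hx; exfalso; exact (not_lt_zero _ Hx). Qed.

Lemma lt_opow_inv : forall Jb (g : Jb -> Ord) a, olt a (opow (osup Jb g)) ->
  ole a ozero \/ exists j n, ole a (omulnat (opow (g j)) n).
Proof.
  intros Jb g a [[u|[j n]] H]. left; exact H. right; exists j, n; exact H.
Qed.

Lemma closed_opow : forall b, closed (opow b).
Proof.
  induction b as [Jb g IH]. intros a c Ha Hc.
  assert (Hgen : forall j n m, ole a (omulnat (opow (g j)) n) -> ole c (omulnat (opow (g j)) m) ->
             olt (nsum a c) (opow (osup Jb g))).
  { intros j n m H1 H2. set (d := opow (g j)).
    apply (ole_olt_trans _ (omulnat d (n+m))).
    - eapply ole_trans. { apply nsum_mono; [exact H1|exact H2]. }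
      eapply ole_trans. { apply nsum_mono; apply oadd_ge_l. }
      eapply ole_trans. { apply (keyM d (IH j) n ozero (ozero_lt_opow _) m ozero (ozero_lt_opow _)). }
      eapply ole_trans. { apply oadd_mono; [apply ole_refl|apply nsum_zero]. }
      apply oadd_zero.
    - apply (olt_intro _ _ _ (inr (j, n+m))). apply ole_refl. }
  apply lt_opow_inv in Ha as [Ha|(j&n&Ha)]; apply lt_opow_inv in Hc as [Hc|(k&m&Hc)].
  - eapply ole_olt_trans. { apply nsum_mono; eauto. }
    eapply ole_olt_trans. { apply nsum_zero. } apply ozero_lt_opow.
  - apply (Hgen k 0 m); auto.
  - apply (Hgen j n 0); auto.
  - destruct (ole_total (g j) (g k)) as [H|H].
    + apply (Hgen k n m); auto. eapply ole_trans; [exact Ha|]. apply omul_mono_base, opow_mono, H.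
    + apply (Hgen j n m); auto. eapply ole_trans; [exact Hc|]. apply omul_mono_base, opow_mono, olt_ole, H.
Qed.

Lemma closed_oeq : forall a b, closed a -> oeq a b -> closed b.
Proof.
  intros a b H [H1 H2] x y Hx Hy. eapply olt_ole_trans; [|exact H1].
  apply H; eapply olt_ole_trans; eauto.
Qed.

Definition Ch {T : Type} (le : T -> T -> Prop) (t s : list T) : Prop :=
  antichain_seq le t /\ exists x, t = s ++ [x].

Lemma ac_prefix : forall T (le : T -> T -> Prop) s t, antichain_seq le (s ++ t) -> antichain_seq le s.
Proof.
  intros T le s t H i j x y Hij Hi Hj. eapply H; eauto.
  - rewrite nth_error_app1; eauto. apply nth_error_Some. congruence.
  - rewrite nth_error_app1; eauto. apply nth_error_Some. congruence.
Qed.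

Lemma ac_map : forall T1 T2 (le1 : T1 -> T1 -> Prop) (le2 : T2 -> T2 -> Prop) (h : T1 -> T2),
  (forall x y, le2 (h x) (h y) -> le1 x y) ->
  forall s, antichain_seq le1 s -> antichain_seq le2 (map h s).
Proof.
  intros T1 T2 le1 le2 h Hh s H i j x y Hij Hi Hj Hxy.
  rewrite nth_error_map in Hi, Hj.
  destruct (nth_error s i) as [x'|] eqn:E1; [|discriminate].
  destruct (nth_error s j) as [y'|] eqn:E2; [|discriminate].
  simpl in Hi, Hj. injection Hi; injection Hj; intros; subst.
  eapply H; eauto.
Qed.

Lemma ac_unmap : forall T1 T2 (le1 : T1 -> T1 -> Prop) (le2 : T2 -> T2 -> Prop) (h : T1 -> T2),
  (forall x y, le1 x y -> le2 (h x) (h y)) ->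
  forall s, antichain_seq le2 (map h s) -> antichain_seq le1 s.
Proof.
  intros T1 T2 le1 le2 h Hh s H i j x y Hij Hi Hj Hxy.
  eapply (H i j (h x) (h y)); eauto; rewrite nth_error_map; [rewrite Hi|rewrite Hj]; reflexivity.
Qed.

Lemma rank_child : forall T (le : T -> T -> Prop) r, is_rank_fn le r ->
  forall s x, antichain_seq le (s ++ [x]) -> olt (r (s ++ [x])) (r s).
Proof.
  intros T le r Hr s x H.
  destruct (Hr s (ac_prefix _ _ _ _ H)) as [_ H2].
  eapply olt_ole_trans; [|exact H2].
  apply (olt_intro _ _ (fun t : children le s => r (proj1_sig t))
           (exist _ (s ++ [x]) (conj H (ex_intro _ x eq_refl)))).
  apply ole_refl.
Qed.

Lemma rank_bound : forall T (le : T -> T -> Prop) r, is_rank_fn le r ->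
  forall B : list T -> Ord,
  (forall s x, antichain_seq le (s ++ [x]) -> olt (B (s ++ [x])) (B s)) ->
  forall s, antichain_seq le s -> ole (r s) (B s).
Proof.
  intros T le r Hr B HB.
  assert (H : forall o s, ole (r s) o -> antichain_seq le s -> ole (r s) (B s)).
  { induction o as [Ia f IH]. intros s Hso Hs.
    destruct (Hr s Hs) as [H1 _]. eapply ole_trans; [exact H1|].
    apply osup_le. intros [t [Ht [x ->]]]. simpl.
    pose proof (olt_ole_trans _ _ _ (rank_child _ _ _ Hr _ _ Ht) Hso) as [i Hi].
    eapply ole_olt_trans. { apply (IH i); auto. }
    apply HB; auto. }
  intros s Hs. apply (H (r s)); auto. apply ole_refl.
Qed.

Lemma rank_acc : forall T (le : T -> T -> Prop) r, is_rank_fn le r -> forall s, Acc (Ch le) s.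
Proof.
  intros T le r Hr.
  assert (H : forall o s, ole (r s) o -> Acc (Ch le) s).
  { induction o as [Ia f IH]. intros s Hso. constructor. intros t [Ht [x ->]].
    pose proof (olt_ole_trans _ _ _ (rank_child _ _ _ Hr _ _ Ht) Hso) as [i Hi].
    apply (IH i); auto. }
  intros s; apply (H (r s)), ole_refl.
Qed.

Lemma acc_transfer : forall T1 T2 (R1 : T1 -> T1 -> Prop) (R2 : T2 -> T2 -> Prop) (h : T1 -> T2),
  (forall t s, R1 t s -> R2 (h t) (h s)) -> forall s, Acc R2 (h s) -> Acc R1 s.
Proof.
  intros T1 T2 R1 R2 h Hh s Hs. remember (h s) as hs eqn:E. revert s E.
  induction Hs as [hs _ IH]. intros s ->. constructor. intros t Ht. eapply IH; eauto.
Qed.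

Lemma rank_exists : forall T (le : T -> T -> Prop), (forall s, Acc (Ch le) s) ->
  exists r, is_rank_fn le r.
Proof.
  intros T le Hwf.
  set (F := fun (s : list T) (rec : forall t, Ch le t s -> Ord) =>
              osup (children le s) (fun t => rec (proj1_sig t) (proj2_sig t))).
  exists (Fix (R := Ch le) Hwf (fun _ => Ord) F).
  intros s Hs. rewrite Fix_eq.
  - unfold F. split; apply ole_refl.
  - intros x f g Hfg. unfold F. f_equal. apply functional_extensionality. intros t. apply Hfg.
Qed.

Lemma rank_unique : forall T (le : T -> T -> Prop) r1 r2, is_rank_fn le r1 -> is_rank_fn le r2 ->
  forall s, antichain_seq le s -> ole (r1 s) (r2 s).
Proof.
  intros T le r1 r2 H1 H2. apply (rank_bound _ le); auto. intros; apply (rank_child _ le); auto.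
Qed.

Lemma ac_cons_inv : forall T (le : T -> T -> Prop) a l, antichain_seq le (a :: l) ->
  antichain_seq le l /\ (forall y, In y l -> ~ le a y /\ ~ le y a).
Proof.
  intros T le a l H. split.
  - intros i j x y Hij Hi Hj. apply (H (S i) (S j)); auto.
  - intros y Hy. apply In_nth_error in Hy as [n Hn]. split.
    + apply (H 0 (S n)); auto.
    + apply (H (S n) 0); auto.
Qed.

Lemma ac_cons : forall T (le : T -> T -> Prop) a l, antichain_seq le l ->
  (forall y, In y l -> ~ le a y /\ ~ le y a) -> antichain_seq le (a :: l).
Proof.
  intros T le a l H1 H2 [|i] [|j] x y Hij Hi Hj; simpl in *.
  - congruence.
  - injection Hi as <-. apply (H2 y). eapply nth_error_In; eauto.
  - injection Hj as <-. apply (H2 x). eapply nth_error_In; eauto.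
  - apply (H1 i j); auto.
Qed.

Fixpoint lift {A : Type} (P : A -> Prop) (l : list A) : list {x | P x} :=
  match l with
  | [] => []
  | a :: l' => match excluded_middle_informative (P a) with
               | left h => exist P a h :: lift P l'
               | right _ => lift P l'
               end
  end.

Lemma lift_app : forall A (P : A -> Prop) l1 l2, lift P (l1 ++ l2) = lift P l1 ++ lift P l2.
Proof.
  intros A P l1 l2; induction l1 as [|a l IH]; simpl; auto.
  destruct (excluded_middle_informative (P a)); simpl; rewrite IH; auto.
Qed.

Lemma lift_in : forall A (P : A -> Prop) a, P a -> exists h, lift P [a] = [exist P a h].
Proof.
  intros A P a Ha; simpl. destruct (excluded_middle_informative (P a)) as [h|h].
  exists h; auto. contradiction.
Qed.

Lemma lift_out : forall A (P : A -> Prop) a, ~ P a -> lift P [a] = [].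
Proof.
  intros A P a Ha; simpl. destruct (excluded_middle_informative (P a)) as [h|h]; auto. contradiction.
Qed.

Lemma In_lift : forall A (P : A -> Prop) l y, In y (map (@proj1_sig _ _) (lift P l)) -> In y l.
Proof.
  intros A P l y; induction l as [|a l IH]; simpl; auto.
  destruct (excluded_middle_informative (P a)); simpl; intuition.
Qed.

Lemma ac_lift_map : forall A (le : A -> A -> Prop) P l, antichain_seq le l ->
  antichain_seq le (map (@proj1_sig _ _) (lift P l)).
Proof.
  intros A le P l; induction l as [|a l IH]; intros H; simpl.
  - intros [|] [|]; simpl; discriminate.
  - apply ac_cons_inv in H as [H1 H2].
    destruct (excluded_middle_informative (P a)); simpl; auto.
    apply ac_cons; auto. intros y Hy. apply H2. eapply In_lift; eauto.
Qed.

Lemma ac_sub_iff1 : forall A (le : A -> A -> Prop) (P : A -> Prop) s,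
  antichain_seq (sub_le le P) s -> antichain_seq le (map (@proj1_sig _ _) s).
Proof. intros. eapply ac_map; [|exact H]. intros x y Hxy; exact Hxy. Qed.

Lemma ac_sub_iff2 : forall A (le : A -> A -> Prop) (P : A -> Prop) s,
  antichain_seq le (map (@proj1_sig _ _) s) -> antichain_seq (sub_le le P) s.
Proof. intros. eapply ac_unmap; [|exact H]. intros x y Hxy; exact Hxy. Qed.

Lemma ac_lift : forall A (le : A -> A -> Prop) P l, antichain_seq le l ->
  antichain_seq (sub_le le P) (lift P l).
Proof. intros. apply ac_sub_iff2, ac_lift_map; auto. Qed.

Definition Wd {A : Type} (le : A -> A -> Prop) (P : A -> Prop) (b : Ord) : Prop :=
  has_width (sub_le le P) b.

Lemma W_exists : forall A (le : A -> A -> Prop) rA, is_rank_fn le rA ->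
  forall P, exists b, Wd le P b.
Proof.
  intros A le rA HrA P.
  assert (Hacc : forall s, Acc (Ch (sub_le le P)) s).
  { intros s. apply (acc_transfer _ _ _ (Ch le) (map (@proj1_sig _ _))).
    - intros t u [Ht [x ->]]. split. apply ac_sub_iff1; auto.
      exists (proj1_sig x). rewrite map_app; reflexivity.
    - eapply rank_acc; eauto. }
  destruct (rank_exists _ _ Hacc) as [r Hr]. exists (r []), r. split; auto.
  split; apply ole_refl.
Qed.

Lemma W_mono : forall A (le : A -> A -> Prop) (P Q : A -> Prop) b c,
  (forall x, P x -> Q x) -> Wd le P b -> Wd le Q c -> ole b c.
Proof.
  intros A le P Q b c HPQ [rP [HrP [HP1 HP2]]] [rQ [HrQ [HQ1 HQ2]]].
  eapply ole_trans; [exact HP2|]. eapply ole_trans; [|exact HQ1].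
  apply (rank_bound _ _ _ HrP (fun s => rQ (lift Q (map (@proj1_sig _ _) s)))).
  - intros s x Hs.
    assert (Hac := ac_lift _ le Q _ (ac_sub_iff1 _ _ _ _ Hs)).
    rewrite map_app in *. change (map _ [x]) with [proj1_sig x] in *. rewrite !lift_app in *.
    destruct (lift_in _ Q (proj1_sig x) (HPQ _ (proj2_sig x))) as [h Eh].
    rewrite Eh in *. apply (rank_child _ _ _ HrQ); auto.
  - intros [|] [|]; simpl; discriminate.
Qed.

Lemma W_union : forall A (le : A -> A -> Prop) rA, is_rank_fn le rA ->
  forall (R P Q : A -> Prop) r b c, (forall x, R x -> P x \/ Q x) ->
  Wd le R r -> Wd le P b -> Wd le Q c -> ole r (nsum b c).
Proof.
  intros A le rA HrA R P Q r b c HR [rR [HrR [HR1 HR2]]] [rP [HrP [HP1 HP2]]] HQ.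
  set (Q' := fun x => ~ P x /\ Q x).
  destruct (W_exists _ _ _ HrA Q') as [d Hd].
  assert (Hdc : ole d c) by (eapply W_mono; [|exact Hd|exact HQ]; intros x [_ H]; exact H).
  destruct Hd as [rQ [HrQ [HQ1 HQ2]]].
  eapply ole_trans; [exact HR2|].
  eapply ole_trans.
  2:{ apply nsum_mono. exact HP1. eapply ole_trans; [exact HQ1|exact Hdc]. }
  apply (rank_bound _ _ _ HrR (fun s => nsum (rP (lift P (map (@proj1_sig _ _) s)))
                                             (rQ (lift Q' (map (@proj1_sig _ _) s))))).
  - intros s x Hs.
    assert (Hac1 := ac_lift _ le P _ (ac_sub_iff1 _ _ _ _ Hs)).
    assert (Hac2 := ac_lift _ le Q' _ (ac_sub_iff1 _ _ _ _ Hs)).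
    rewrite map_app in *. change (map _ [x]) with [proj1_sig x] in *. rewrite !lift_app in *.
    destruct (classic (P (proj1_sig x))) as [Hp|Hp].
    + destruct (lift_in _ P _ Hp) as [h Eh].
      rewrite (lift_out _ Q' (proj1_sig x)) in * by (intros [H _]; contradiction).
      rewrite Eh in *. rewrite app_nil_r.
      apply nsum_strict_l. apply (rank_child _ _ _ HrP); auto.
    + assert (Hq : Q' (proj1_sig x)).
      { split; auto. destruct (HR _ (proj2_sig x)); tauto. }
      destruct (lift_in _ Q' _ Hq) as [h Eh].
      rewrite (lift_out _ P (proj1_sig x)) in * by exact Hp.
      rewrite Eh in *. rewrite app_nil_r.
      apply nsum_strict_r. apply (rank_child _ _ _ HrQ); auto.
  - intros [|] [|]; simpl; discriminate.
Qed.

Lemma W_empty : forall A (le : A -> A -> Prop) (P : A -> Prop) b,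
  (forall x, ~ P x) -> Wd le P b -> ole b ozero.
Proof.
  intros A le P b HP [r [Hr [H1 H2]]]. eapply ole_trans; [exact H2|].
  apply (rank_bound _ _ _ Hr (fun _ => ozero)).
  - intros s x _. exfalso. exact (HP _ (proj2_sig x)).
  - intros [|] [|]; simpl; discriminate.
Qed.

Lemma W_chain : forall A (le : A -> A -> Prop) (P : A -> Prop) b,
  (forall x y, P x -> P y -> le x y \/ le y x) -> Wd le P b -> ole b (ofin 1).
Proof.
  intros A le P b HP [r [Hr [H1 H2]]]. eapply ole_trans; [exact H2|].
  apply (rank_bound _ _ _ Hr (fun s => match s with [] => ofin 1 | _ => ozero end)).
  - intros [|y s] x Hs.
    + change (olt ozero (ofin 1)). apply (olt_intro _ _ _ tt). apply ole_refl.
    + exfalso. apply ac_cons_inv in Hs as [_ Hs].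
      destruct (Hs x) as [Ha Hb]. { apply in_or_app; right; left; auto. }
      destruct (HP _ _ (proj2_sig y) (proj2_sig x)); auto.
  - intros [|] [|]; simpl; discriminate.
Qed.

Lemma W_top : forall A (le : A -> A -> Prop) w b, has_width le w ->
  Wd le (fun _ => True) b -> oeq b w.
Proof.
  intros A le w b [rA [HrA [HA1 HA2]]] [rT [HrT [HT1 HT2]]]. split.
  - eapply ole_trans; [exact HT2|]. eapply ole_trans; [|exact HA1].
    apply (rank_bound _ _ _ HrT (fun s => rA (map (@proj1_sig _ _) s))).
    + intros s x Hs. assert (Hac := ac_sub_iff1 _ _ _ _ Hs). rewrite map_app in *.
      apply (rank_child _ _ _ HrA); auto.
    + intros [|] [|]; simpl; discriminate.
  - eapply ole_trans; [exact HA2|]. eapply ole_trans; [|exact HT1].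
    apply (rank_bound _ _ _ HrA (fun s => rT (lift (fun _ => True) s))).
    + intros s x Hs. assert (Hac := ac_lift _ le (fun _ => True) _ Hs). rewrite lift_app in *.
      destruct (lift_in _ (fun _ : A => True) x I) as [h Eh]. rewrite Eh in *.
      apply (rank_child _ _ _ HrT); auto.
    + intros [|] [|]; simpl; discriminate.
Qed.

Lemma wqo_min : forall A (le : A -> A -> Prop), wqo le -> forall P : A -> Prop,
  (exists x, P x) -> exists m, P m /\ forall y, le y m -> ~ le m y -> ~ P y.
Proof.
  intros A le [[Hrefl Htr] Hgood] P [x0 Hx0].
  set (slt := fun y x => le y x /\ ~ le x y).
  assert (Hacc : forall x, Acc slt x).
  { intros x. apply NNPP. intros Hna.
    assert (Hstep : forall x, ~ Acc slt x -> exists y, slt y x /\ ~ Acc slt y).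
    { intros z Hz. apply NNPP. intros Hn. apply Hz. constructor. intros y Hy.
      apply NNPP. intros Hy'. apply Hn. exists y; auto. }
    set (nxt := fun (p : {z | ~ Acc slt z}) =>
             let (y, Hy) := constructive_indefinite_description _ (Hstep _ (proj2_sig p)) in
             exist (fun z => ~ Acc slt z) y (proj2 Hy)).
    assert (Hnxt : forall p, slt (proj1_sig (nxt p)) (proj1_sig p)).
    { intros p. unfold nxt. destruct (constructive_indefinite_description _ _) as [y [Hy1 Hy2]].
      exact Hy1. }
    set (f := fix f (n : nat) : {z | ~ Acc slt z} :=
                match n with 0 => exist _ x Hna | S k => nxt (f k) end).
    assert (Hdesc : forall i j, i < j -> slt (proj1_sig (f j)) (proj1_sig (f i))).
    { intros i j Hij. induction Hij.
      - apply (Hnxt (f i)).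
      - destruct IHHij as [H1 H2]. destruct (Hnxt (f m)) as [H3 H4]. split.
        + eapply Htr; eauto.
        + intros H5. apply H2. eapply Htr; eauto. }
    destruct (Hgood (fun n => proj1_sig (f n))) as (i & j & Hij & Hle).
    destruct (Hdesc i j Hij) as [_ Hn]. contradiction. }
  induction (Hacc x0) as [x _ IH].
  destruct (classic (exists y, slt y x /\ P y)) as [[y [Hy Py]]|Hn].
  - eapply IH; eauto.
  - exists x. split; auto. intros y H1 H2 Py. apply Hn. exists y. split; auto. split; auto.
Qed.

Lemma oeq_trans : forall a b c, oeq a b -> oeq b c -> oeq a c.
Proof. intros a b c [H1 H2] [H3 H4]; split; eapply ole_trans; eauto. Qed.

Lemma oeq_sym : forall a b, oeq a b -> oeq b a.
Proof. intros a b [H1 H2]; split; auto. Qed.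

Lemma Wd_oeq : forall A (le : A -> A -> Prop) P b c, Wd le P b -> oeq b c -> Wd le P c.
Proof. intros A le P b c [r [Hr Hb]] H. exists r; split; auto. eapply oeq_trans; eauto. Qed.

Lemma finish : forall A (le : A -> A -> Prop) rA, is_rank_fn le rA -> forall (a : Ord) (C : A -> Prop),
  closed a -> olt ozero a -> Wd le C a ->
  (forall x, C x -> exists b, Wd le (fun y => C y /\ le y x) b /\ olt b a) ->
  transferable le C.
Proof.
  intros A le rA HrA a C Hcl H0 HC Hx.
  assert (HE : forall xs, (forall x, In x xs -> C x) -> forall e,
             Wd le (fun y => C y /\ exists x, In x xs /\ le y x) e -> olt e a).
  { induction xs as [|x xs IH]; intros Hxs e He.
    - eapply ole_olt_trans; [|exact H0]. eapply W_empty; [|exact He].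
      intros y [_ [z [[] _]]].
    - destruct (Hx x (Hxs x (or_introl eq_refl))) as [b1 [Hb1 Hb1a]].
      destruct (W_exists _ _ _ HrA (fun y => C y /\ exists x, In x xs /\ le y x)) as [e' He'].
      assert (He'a : olt e' a) by (apply (IH (fun z Hz => Hxs z (or_intror Hz))); auto).
      eapply ole_olt_trans.
      2:{ apply (Hcl _ _ Hb1a He'a). }
      eapply (W_union _ _ _ HrA); [|exact He|exact Hb1|exact He'].
      intros y [Cy [z [[<-|Hz] Hyz]]]. left; auto. right; split; eauto. }
  exists a. split; auto. intros xs Hxs.
  destruct (W_exists _ _ _ HrA (fun y => C y /\ forall x, In x xs -> ~ le y x)) as [b Hb].
  apply (Wd_oeq _ _ _ b); auto. split.
  - eapply W_mono; [|exact Hb|exact HC]. intros y [Cy _]; exact Cy.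
  - destruct (ole_total a b) as [H|H]; auto. exfalso.
    destruct (W_exists _ _ _ HrA (fun y => C y /\ exists x, In x xs /\ le y x)) as [e He].
    assert (Hea := HE xs Hxs e He).
    apply (olt_irrefl a). eapply ole_olt_trans; [|apply (Hcl _ _ H Hea)].
    eapply (W_union _ _ _ HrA); [|exact HC|exact Hb|exact He].
    intros y Cy. destruct (classic (exists x, In x xs /\ le y x)) as [Hy|Hy].
    + right; auto.
    + left. split; auto. intros x Hin Hle. apply Hy; eauto.
Qed.

Theorem mainTheorem8 (A : Type) (le : A -> A -> Prop) (wA : Ord) :
  wqo le ->
  has_width le wA ->
  ole oomega wA ->
  add_indecomposable wA ->
  exists C : A -> Prop,
    has_width (sub_le le C) wA /\ transferable le C.
Proof.
  intros Hwqo Hw Hom [g Hg].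
  assert (Hcl : closed wA) by (eapply closed_oeq; [apply closed_opow|apply oeq_sym; exact Hg]).
  pose proof Hw as [rA [HrA _]].
  assert (H1a : olt (ofin 1) wA).
  { eapply olt_ole_trans; [|exact Hom]. apply (olt_intro _ _ _ 1). apply ole_refl. }
  assert (H0a : olt ozero wA).
  { eapply olt_trans; [|exact H1a]. apply (olt_intro _ _ _ tt). apply ole_refl. }
  destruct Hwqo as [[Hrefl Htr] Hgood] eqn:EW.
  set (Pm := fun m => forall b, Wd le (fun y => le y m) b -> ole wA b).
  assert (HnP : forall x, ~ Pm x -> exists b, Wd le (fun y => le y x) b /\ olt b wA).
  { intros x Hx. apply not_all_ex_not in Hx as [b Hb]. exists b.
    apply imply_to_and in Hb as [Hb1 Hb2]. split; auto.
    destruct (ole_total wA b); tauto. }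
  assert (HCx : forall (C : A -> Prop) x, ~ Pm x ->
            exists b, Wd le (fun y => C y /\ le y x) b /\ olt b wA).
  { intros C x Hx. destruct (HnP x Hx) as [b [Hb Hba]].
    destruct (W_exists _ _ _ HrA (fun y => C y /\ le y x)) as [c Hc].
    exists c. split; auto. eapply ole_olt_trans; [|exact Hba].
    eapply W_mono; [|exact Hc|exact Hb]. intros y [_ H]; exact H. }
  destruct (classic (exists m, Pm m)) as [Hex|Hno].
  - destruct (wqo_min _ _ Hwqo _ Hex) as [m [Pmm Hmin]].
    set (C := fun y => le y m /\ ~ le m y).
    destruct (W_exists _ _ _ HrA C) as [b Hb].
    assert (HCa : Wd le C wA).
    { apply (Wd_oeq _ _ _ b); auto. split.
      - destruct (W_exists _ _ _ HrA (fun _ => True)) as [t Ht].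
        eapply ole_trans. { eapply W_mono; [|exact Hb|exact Ht]. intros; exact I. }
        apply (W_top _ _ _ _ Hw Ht).
      - destruct (ole_total wA b) as [H|H]; auto. exfalso.
        destruct (W_exists _ _ _ HrA (fun y => le y m /\ le m y)) as [e He].
        assert (Hea : olt e wA).
        { eapply ole_olt_trans; [|exact H1a]. eapply W_chain; [|exact He].
          intros x y [Hx1 Hx2] [Hy1 Hy2]. left. eapply Htr; eauto. }
        destruct (W_exists _ _ _ HrA (fun y => le y m)) as [d Hd].
        apply (olt_irrefl wA). eapply ole_olt_trans; [apply (Pmm d Hd)|].
        eapply ole_olt_trans; [|apply (Hcl _ _ H Hea)].
        eapply (W_union _ _ _ HrA); [|exact Hd|exact Hb|exact He].
        intros y Hy. destruct (classic (le m y)); [right|left]; split; auto. }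
    exists C. split; auto.
    apply (finish _ _ _ HrA wA); auto.
    intros x [Hx1 Hx2]. apply HCx. apply Hmin; auto.
  - exists (fun _ => True).
    destruct (W_exists _ _ _ HrA (fun _ => True)) as [t Ht].
    assert (HT : Wd le (fun _ => True) wA) by (apply (Wd_oeq _ _ _ t); auto; apply (W_top _ _ _ _ Hw Ht)).
    split; auto.
    apply (finish _ _ _ HrA wA); auto.
    intros x _. apply HCx. intros Hx; apply Hno; eauto.
Qed.
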